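(* Let $\mathcal{P}$ be a probability distribution on $\mathbb{R}$ and let $X$ be a random variable with distribution $\mathcal{P}$. Define $g(p) := \inf\{r \in \mathbb{R} : \mathbb{P}(X \geq r) \leq p\}$ for $0<p<1$. Assume that $\mathbb{E}|X| < \infty$, that $g(p) \to \infty$ as $p \to 0^+$, and that $g$ is slowly varying at zero, i.e. $g(\lambda p)/g(p) \to 1$ as $p \to 0^+$ for every fixed $\lambda > 0$. For $n\in\mathbb{N}$ let $M_n = \max_{1\le i\le n} X_i$, where $X_1,\dots,X_n$ are i.i.d. with distribution $\mathcal{P}$. Then $$\mathbb{E} M_n \leq g(1/n)(1+o(1)) \quad \text{as } n\to\infty.$$ *)

(* Defs.v *)
From HB Require Import structures.
From mathcomp Require Import all_boot all_order all_algebra.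
From mathcomp Require Import all_classical all_reals all_analysis.
Import Order.TTheory GRing.Theory Num.Theory.
Import numFieldNormedType.Exports.
Local Open Scope classical_set_scope.
Local Open Scope ring_scope.

Definition upper_quantile {R : realType} (Q : probability R R) (p : R) : R :=
  inf [set r : R | (Q [set x : R | (r <= x)%R] <= p%:E)%E].

Definition mutually_independent {d} {T : measurableType d} {R : realType}
    (P : probability T R) (X : nat -> T -> R) : Prop :=
  forall (s : seq nat) (B : nat -> set R), uniq s ->
    (forall i, measurable (B i)) ->
    P (\bigcap_(i in [set i | i \in s]) (X i @^-1` B i)) =
    (\prod_(i <- s) P (X i @^-1` B i))%E.

Definition has_distribution {d} {T : measurableType d} {R : realType}
    (P : probability T R) (Y : T -> R) (Q : probability R R) : Prop :=
  forall B : set R, measurable B -> P (Y @^-1` B) = Q B.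

(* M_n = max(X_0, ..., X_{n-1}) (meaningful for n >= 1) *)
Definition maxn_rv {T} {R : realType} (X : nat -> T -> R) (n : nat) : T -> R :=
  fun t => \big[Num.max/X 0%N t]_(i < n) X i t.

(* Main.v *)
Require Import Defs.
From HB Require Import structures.
From mathcomp Require Import all_boot all_order all_algebra.
From mathcomp Require Import all_classical all_reals all_analysis.
From mathcomp Require Import lra ring measurable_realfun.
Import Order.TTheory GRing.Theory Num.Theory.
Import numFieldNormedType.Exports.
Local Open Scope classical_set_scope.
Local Open Scope ring_scope.
Lemma near0P (R : realType) (P : R -> Prop) :
  (\forall p \near 0^'+, P p) -> exists2 d : R, 0 < d & forall p, 0 < p < d -> P p.
Proof.
move=> /nbhs_ballP[e e0 He]; exists e => // p /andP[p0 pe]; apply: He => //.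
by rewrite /ball /= sub0r normrN gtr0_norm.
Qed.

Lemma quantile_tail (R : realType) (Q : probability R R) (p r : R) :
  0 < upper_quantile Q p -> upper_quantile Q p < r ->
  (Q [set x : R | (r <= x)%R] <= p%:E)%E.
Proof.
rewrite /upper_quantile => g0 gr.
have S0 : [set r : R | (Q [set x : R | (r <= x)%R] <= p%:E)%E] !=set0.
  apply/set0P/negP => /eqP E; move: g0; by rewrite E inf0 ltxx.
have [y Sy yr] := inf_lt S0 gr.
apply: le_trans Sy; apply: le_measure; rewrite ?inE /=.
- by rewrite -set_itv_c_infty//; exact: measurable_itv.
- by rewrite -set_itv_c_infty//; exact: measurable_itv.
- by move=> x /= rx; apply: le_trans rx; apply/ltW.
Qed.

Lemma potter (R : realType) (g : R -> R) (K rho p0 : R) : 1 <= K -> 0 < rho ->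
  (forall p, 0 < p < p0 -> 0 < g p /\ g (K^-1 * p) < rho * g p) ->
  forall k p, 0 < p < p0 -> g (K^-1 ^+ k.+1 * p) < rho ^+ k.+1 * g p.
Proof.
move=> K1 rho0 H; elim=> [|k IH] p /andP[pg0 pp0].
  by rewrite !expr1; have [] := H p; rewrite ?pg0 ?pp0.
have K0 : 0 < K by apply: lt_le_trans K1.
have q0 : 0 < K^-1 ^+ k.+1 * p by rewrite mulr_gt0 // ?exprn_gt0 // invr_gt0.
have qp : K^-1 ^+ k.+1 * p <= p.
  apply: ler_piMl; first exact: ltW.
  by apply: exprn_ile1; rewrite ?invr_ge0 ?(ltW K0) // invf_le1.
have qp0 : 0 < K^-1 ^+ k.+1 * p < p0 by rewrite q0 (le_lt_trans qp).
have -> : K^-1 ^+ k.+2 * p = K^-1 * (K^-1 ^+ k.+1 * p) by rewrite exprS mulrA.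
have [_ h] := H _ qp0.
apply: (lt_trans h); rewrite [rho ^+ _]exprS -mulrA ltr_pM2l //; by apply: IH; rewrite pg0 pp0.
Qed.
Lemma bern (R : realType) (rho : R) (N : nat) : 1 <= rho ->
  1 + N%:R * (rho - 1) <= rho ^+ N.
Proof.
move=> r1; elim: N => [|N IH]; first by rewrite mul0r addr0 expr0.
rewrite exprS -natr1 mulrDl mul1r.
have h : rho * (1 + N%:R * (rho - 1)) <= rho * rho ^+ N.
  by rewrite ler_pM2l // (lt_le_trans ltr01 r1).
apply: le_trans h.
have : 0 <= (rho - 1) * (N%:R * (rho - 1)) by rewrite mulr_ge0 // ?subr_ge0 // mulr_ge0 // subr_ge0.
nra.
Qed.

Lemma pow_unbounded (R : realType) (rho y : R) : 1 < rho ->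
  exists N : nat, y < rho ^+ N.
Proof.
move=> r1; exists (Num.truncn (y / (rho - 1))).+1.
apply: lt_le_trans (@bern _ rho _ (ltW r1)).
have r0 : 0 < rho - 1 by rewrite subr_gt0.
have := archimedean.Num.Theory.truncnS_gt (y / (rho - 1)).
rewrite ltr_pdivrMr //; lra.
Qed.

Lemma pointwise (R : realType) (b0 rho x : R) : 0 < b0 -> 1 < rho ->
  (x%:E <= b0%:E + \sum_(0 <= k <oo)
     (((b0 * rho ^+ k.+1 - b0 * rho ^+ k) * ((b0 * rho ^+ k <= x)%R : bool)%:R)%R)%:E)%E.
Proof.
move=> b00 r1.
have c0 k : 0 <= b0 * rho ^+ k.+1 - b0 * rho ^+ k.
  rewrite subr_ge0 ler_pM2l // exprS ler_peMl //; last exact: ltW.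
  by rewrite exprn_ge0 // ltW // (lt_trans ltr01 r1).
have t0 k : (0 <= (((b0 * rho ^+ k.+1 - b0 * rho ^+ k) * ((b0 * rho ^+ k <= x)%R : bool)%:R)%R)%:E)%E.
  by rewrite lee_fin mulr_ge0.
have inc k j : (k <= j)%N -> b0 * rho ^+ k <= b0 * rho ^+ j.
  by move=> kj; rewrite ler_pM2l // ler_eXn2l // ltW.
have [N xN] : exists N : nat, x < b0 * rho ^+ N.
  have [N hN] := @pow_unbounded _ rho (x / b0) r1; exists N.
  by rewrite -ltr_pdivrMl // mulrC.
have key : forall N, x < b0 * rho ^+ N -> x <= b0 + \sum_(0 <= k < N)
     ((b0 * rho ^+ k.+1 - b0 * rho ^+ k) * ((b0 * rho ^+ k <= x)%R : bool)%:R).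
  elim=> [|M IH]; first by rewrite expr0 mulr1 big_geq // addr0 => /ltW.
  move=> xM; rewrite big_nat_recr //=.
  have [xm|xm] := ltP x (b0 * rho ^+ M).
    rewrite addrA; apply: le_trans (IH xm) _; rewrite lerDl mulr_ge0 //.
  rewrite [X in _ + X]addrC addrA.
  rewrite (eq_big_nat _ _ (F2 := fun k => (b0 * rho ^+ k.+1 - b0 * rho ^+ k))); last first.
    by move=> k /andP[_ kM]; rewrite (le_trans (inc _ _ (ltnW kM)) xm) mulr1.
  rewrite telescope_sumr // mulr1 expr0 mulr1; lra.
apply: le_trans (_ : (b0 + \sum_(0 <= k < N)
     ((b0 * rho ^+ k.+1 - b0 * rho ^+ k) * ((b0 * rho ^+ k <= x)%R : bool)%:R))%:E <= _)%E.
  by rewrite lee_fin key.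
rewrite EFinD leeD2l // -sumEFin.
exact: nneseries_lim_ge.
Qed.
Lemma measurable_maxn_rv (R : realType) d (T : measurableType d) (X : nat -> T -> R) n :
  (forall i, measurable_fun setT (X i)) -> measurable_fun setT (maxn_rv X n).
Proof.
move=> mX; rewrite /maxn_rv.
elim: (index_enum _) => [|a r IH].
  by under eq_fun do rewrite big_nil; exact: mX.
under eq_fun do rewrite big_cons /=.
exact: (measurable_realfun.measurable_maxr (mX a) IH).
Qed.

Lemma maxn_rv_ge (R : realType) T (X : nat -> T -> R) n t c : (0 < n)%N ->
  c <= maxn_rv X n t -> exists i : 'I_n, c <= X i t.
Proof.
move=> n0; suff : c <= maxn_rv X n t -> c <= X 0%N t \/ exists i : 'I_n, c <= X i t.
  by move=> H /H [h|//]; exists (Ordinal n0).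
rewrite /maxn_rv; elim/big_ind: _ => //.
- by left.
- move=> x y Hx Hy; rewrite le_max => /orP[/Hx|/Hy] //.
- by move=> i _ h; right; exists i.
Qed.
Lemma alg1 (R : realType) (g eps : R) (k : nat) : 0 < eps ->
  ((1 + eps) * g * (1 + eps) ^+ k.+1 - (1 + eps) * g * (1 + eps) ^+ k) *
   (2 * (1 + eps))^-1 ^+ k.+1 = eps * g / (2 ^ (k + 1))%:R.
Proof.
move=> e0; have r0 : (1 + eps) != 0 by apply/lt0r_neq0; lra.
rewrite natrX addn1 exprVn exprMn.
have h : (1 + eps) ^+ k.+1 != 0 by rewrite expf_neq0.
have h2 : (2:R) ^+ k.+1 != 0 by rewrite expf_neq0.
rewrite [(1+eps) ^+ k.+1]exprS. field. by rewrite h2 expf_neq0 // r0.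
Qed.


Lemma main_bound (R : realType) (Q : probability R R) d (T : measurableType d)
  (P : probability T R) (X : nat -> T -> R) (n : nat) (g eps : R) :
  (forall i, measurable_fun setT (X i)) ->
  (forall i, has_distribution P (X i) Q) ->
  (0 < n)%N -> 0 < g -> 0 < eps ->
  (forall k, (Q [set x | ((1 + eps) * g * (1 + eps) ^+ k <= x)%R] <=
     (((2 * (1 + eps))^-1 ^+ k.+1 * n%:R^-1))%:E)%E) ->
  (\int[P]_t (maxn_rv X n t)%:E <= ((1 + 2 * eps) * g)%:E)%E.
Proof.
move=> mX hX n0 g0 e0 tail.
set rho := 1 + eps; set b0 := rho * g; set M := maxn_rv X n.
have r1 : 1 < rho by rewrite /rho; lra.
have b00 : 0 < b0 by rewrite /b0 mulr_gt0 //; lra.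
have mM : measurable_fun setT M by exact: measurable_maxn_rv.
pose B k := [set x : R | (b0 * rho ^+ k <= x)%R].
have mB k : measurable (B k) by rewrite /B -set_itv_c_infty //; exact: measurable_itv.
pose A k := M @^-1` B k.
have mA k : measurable (A k).
  by have := mM measurableT _ (mB k); rewrite setTI.
have PA k : (P (A k) <= ((2 * rho)^-1 ^+ k.+1)%:E)%E.
  pose F (i : nat) := X i @^-1` B k.
  have mF i : measurable (F i) by have := mX i measurableT _ (mB k); rewrite setTI.
  have sub : A k `<=` \big[setU/set0]_(i < n) F i.
    move=> t /= At; have [i hi] := @maxn_rv_ge _ _ X n t _ n0 At.
    rewrite -bigcup_mkord; exists i => //=.
  apply: le_trans (@content_subadditive _ _ _ P (A k) F n (fun i _ => mF i) (mA k) sub) _.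
  apply: le_trans (_ : (\sum_(i < n) (((2 * rho)^-1 ^+ k.+1 * n%:R^-1))%:E <= _)%E).
    apply: lee_sum => i _; apply: le_trans (tail k).
    have E := hX i (B k) (mB k); rewrite -E; exact: lexx.
  rewrite sumEFin sumr_const card_ord.
  have -> : (2 * rho)^-1 ^+ k.+1 / n%:R *+ n = (2 * rho)^-1 ^+ k.+1.
    by rewrite -mulr_natr divfK // pnatr_eq0 -lt0n.
  exact: lexx.
pose c k := b0 * rho ^+ k.+1 - b0 * rho ^+ k.
have c0 k : 0 <= c k.
  rewrite /c subr_ge0 ler_pM2l // exprS ler_peMl //; last exact: ltW.
  by rewrite exprn_ge0 // ltW // (lt_trans ltr01 r1).
pose h k t : \bar R := ((c k * \1_(A k) t)%R)%:E.
have h0 k t : (0 <= h k t)%E by rewrite /h lee_fin mulr_ge0.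
have ind k t : \1_(A k) t = (((b0 * rho ^+ k <= M t)%R : bool)%:R : R).
  by rewrite indicE mem_setE.
have mh k : measurable_fun setT (h k).
  apply/measurable_EFinP; apply: measurable_funM; first exact: measurable_cst.
  exact/measurable_indic.
have hE t : ((M t)%:E <= b0%:E + \big[+%E/0%E]_(0 <= k <oo) h k t)%E.
  have := @pointwise R b0 rho (M t) b00 r1.
  by under [X in (_ <= _ + X)%E -> _]eq_eseriesr do rewrite -ind.
pose H t : \bar R := \big[+%E/0%E]_(0 <= k <oo) h k t.
have mH : measurable_fun setT H.
  have := @ge0_emeasurable_sum _ _ _ setT h xpredT (fun k x _ _ => h0 k x) (fun k _ => mh k).
  by [].
have H0 t : (0 <= H t)%E by apply: nneseries_ge0 => k _ _; exact: h0.
pose f t : \bar R := (M t)%:E.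
have mf : measurable_fun setT f by exact/measurable_EFinP.
have step1 : (\int[P]_t f t <= \int[P]_t (f^\+ t))%E.
  have I0 : (0 <= \int[P]_t (f^\- t))%E.
    by apply: integral_ge0 => t _; exact: funeneg_ge0.
  rewrite integralE; apply: le_trans (leeB (lexx _) I0) _.
  by rewrite sube0.
apply: le_trans step1 _.
have step2 : (\int[P]_t (f^\+ t) <= \int[P]_t (b0%:E + H t))%E.
  apply: ge0_le_integral => //; try by apply: emeasurable_funD => //; exact: measurable_cst.
  all: try exact: measurable_funepos.
  all: try by move=> t _; exact: funepos_ge0.
  move=> t _; rewrite funeposE ge_max; apply/andP; split; first exact: hE.
    by rewrite adde_ge0 // lee_fin ltW.
apply: le_trans step2 _.
rewrite ge0_integralD //; try by move=> t _; rewrite ?lee_fin ?ltW.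
rewrite integral_cst //.
rewrite [X in (b0%:E * X)%E](_ : _ = 1%E); last exact: probability_setT.
rewrite mule1.
rewrite integral_nneseries //.
have Ih k : (\int[P]_x h k x = (c k)%:E * P (A k))%E.
  rewrite /h (@integralZl_indic _ _ _ P setT measurableT (fun _ => A k)) //.
    by rewrite integral_indic // setIT.
  by move=> ck; have := c0 k; rewrite leNgt ck.
have geo : (\sum_(0 <= k <oo) ((eps * g) / (2 ^ (k + 1))%:R)%:E = (eps * g)%:E)%E.
  have := @cvg_geometric_eseries_half R (eps * g) 0.
  rewrite expr0 divr1 => /cvg_lim <- //.
apply: le_trans (_ : (b0%:E + (eps * g)%:E <= _)%E); last first.
  by rewrite -EFinD lee_fin /b0 /rho; lra.
rewrite leeD2l // -geo.
apply: (@lee_nneseries R _ _ xpredT 0) => k _.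
  by move=> _; apply: integral_ge0 => t _; exact: h0.
rewrite Ih -(@alg1 R g eps k e0).
rewrite EFinM; apply: lee_wpmul2l; first by rewrite lee_fin c0.
exact: PA.
Qed.

Lemma key (R : realType) (Q : probability R R)
  (d : measure_display) (T : measurableType d) (P : probability T R)
  (X : nat -> T -> R) :
  (forall i, measurable_fun setT (X i)) ->
  (forall i, has_distribution P (X i) Q) ->
  upper_quantile Q p @[p --> 0^'+] --> +oo ->
  (forall lam : R, 0 < lam ->
     upper_quantile Q (lam * p) / upper_quantile Q p @[p --> 0^'+] --> (1 : R)) ->
  forall eps : R, 0 < eps -> \forall n \near \oo,
    0 < upper_quantile Q n%:R^-1 /\
    (\int[P]_t (maxn_rv X n t)%:E <= ((1 + 2 * eps) * upper_quantile Q n%:R^-1)%:E)%E.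
Proof.
move=> mX hX hg hsv eps e0.
set g := upper_quantile Q.
set rho := 1 + eps; set K := 2 * rho.
have r1 : 1 < rho by rewrite /rho; lra.
have K1 : 1 <= K by rewrite /K; lra.
have K0 : 0 < K by lra.
have h1 : \forall p \near 0^'+, 0 < g p.
  by move/cvgryPgtr : hg; apply; exact: num_real.
have h2 : \forall p \near 0^'+, g (K^-1 * p) / g p < rho.
  have Kp : 0 < K^-1 by rewrite invr_gt0.
  exact: (cvgr_lt _ (hsv K^-1 Kp) _ r1).
have [p0 p00 Hp0] := @near0P R _ (filterI h1 h2).
have Hp : forall p, 0 < p < p0 -> 0 < g p /\ g (K^-1 * p) < rho * g p.
  move=> p /Hp0 [gp hp]; split => //; rewrite -ltr_pdivrMr //.
have pot := @potter R g K rho p0 K1 (lt_trans ltr01 r1) Hp.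
exists (Num.truncn p0^-1).+1 => // n /= hn.
have n0 : (0 < n)%N by apply: leq_trans hn.
have nr0 : 0 < (n%:R : R) by rewrite ltr0n.
have np0 : 0 < (n%:R : R)^-1 < p0.
  rewrite invr_gt0 nr0 /= -(invrK p0) ltf_pV2 ?posrE ?invr_gt0 //.
  apply: lt_le_trans (archimedean.Num.Theory.truncnS_gt _) _.
  by rewrite ler_nat.
have [gn0 _] := Hp _ np0.
split => //.
apply: main_bound => //.
move=> k.
have pk0 : 0 < K^-1 ^+ k.+1 * (n%:R : R)^-1 < p0.
  have [a b] := andP np0.
  have q0 : 0 < K^-1 ^+ k.+1 * (n%:R : R)^-1 by rewrite mulr_gt0 // exprn_gt0 // invr_gt0.
  rewrite q0 /=; apply: le_lt_trans b; apply: ler_piMl; first exact: ltW.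
  by apply: exprn_ile1; rewrite ?invr_ge0 ?(ltW K0) // invf_le1.
apply: quantile_tail; first by have [] := Hp _ pk0.
apply: lt_le_trans (pot k _ np0) _.
by rewrite [rho ^+ _]exprS mulrAC.
Qed.

Theorem proposition3 (R : realType) (Q : probability R R)
  (d : measure_display) (T : measurableType d) (P : probability T R)
  (X : nat -> T -> R) :
  (forall i, measurable_fun setT (X i)) ->
  (forall i, has_distribution P (X i) Q) ->
  mutually_independent P X ->
  (\int[Q]_x (`|x|)%:E < +oo)%E ->
  upper_quantile Q p @[p --> 0^'+] --> +oo ->
  (forall lam : R, 0 < lam ->
     upper_quantile Q (lam * p) / upper_quantile Q p @[p --> 0^'+] --> (1 : R)) ->
  exists e : nat -> R, e @ \oo --> 0 /\
    \forall n \near \oo,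
      (\int[P]_t (maxn_rv X n t)%:E <=
         (upper_quantile Q n%:R^-1 * (1 + e n))%:E)%E.
Proof.
move=> mX hX _ _ hg hsv.
have K := @key R Q d T P X mX hX hg hsv.
pose I := fun n : nat => (\int[P]_t (maxn_rv X n t)%:E)%E.
pose gq := fun n : nat => upper_quantile Q n%:R^-1.
exists (fun n => Num.max 0 (fine (I n) / gq n - 1)); split.
  apply/cvgrPdist_le => eps e0.
  have := K (eps / 2) ltac:(by rewrite divr_gt0).
  apply: filterS => n [g0 hI].
  rewrite sub0r normrN ger0_norm ?le_max ?lexx //.
  rewrite ge_max ltW //=.
  move: hI; rewrite -/(I n) -/(gq n).
  case: (I n) => [r| |] //=.
  - rewrite lee_fin => hr; rewrite lerBlDr ler_pdivrMr //. 
    have : r <= (1 + eps) * gq n by apply: le_trans hr _; rewrite ler_pM2r //; lra.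
    lra.
  - by rewrite mul0r sub0r; lra.
have := K 1 ltr01.
apply: filterS => n [g0 hI].
rewrite -/(I n) -/(gq n) in hI *.
move: hI; case: (I n) => [r| |] //=.
- rewrite !lee_fin => _.
  have h : r / gq n - 1 <= Num.max 0 (r / gq n - 1) by rewrite le_max lexx orbT.
  have : r = gq n * (1 + (r / gq n - 1)) by field; rewrite gt_eqF.
  move=> {1}->; rewrite ler_pM2l //; lra.
- by move=> _; rewrite leNye.
Qed.
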